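(* Let $V$ be a real vector space of odd finite dimension, $G\le\mathrm{GL}(V)$ a finite group such that $V$ is a non-trivial irreducible $\mathbb{R}G$-module and $-\mathrm{id}_V\notin G$, and let $n\in N_{\mathrm{GL}(V)}(G)$ have finite order. Let $\nu=\mathrm{ad}_n\in\mathrm{Aut}(G)$, $G'=\langle\mathrm{Inn}(G),\nu\rangle\le\mathrm{Aut}(G)$, and let $\chi'$ be the character of $G'$ defined below. Suppose there is $g\in G$ such that $\alpha:=\mathrm{ad}_g\circ\nu$ has even order and the restriction of $\chi'$ to the cyclic group $\langle\alpha\rangle$ has positive scalar product with every real-valued irreducible character of $\langle\alpha\rangle$ (i.e. with the trivial character and with the linear character sending $\alpha$ to $-1$). Then the triple $(G,V,n)$ has the $E1$-property.
   Context: For $x\in N_{\mathrm{GL}(V)}(G)$, $\mathrm{ad}_x\in\mathrm{Aut}(G)$ denotes conjugation $y\mapsto xyx^{-1}$. Put $A=\langle G,n\rangle\le\mathrm{GL}(V)$, and $A'=A$ if $-\mathrm{id}_V\notin A$, $A'=A\cap\mathrm{SL}(V)$ if $-\mathrm{id}_V\in A$. The map $A\to G'$, $gn^i\mapsto\mathrm{ad}_g\circ\nu^i$ ($g\in G$, $i\in\mathbb{Z}$) is a surjective homomorphism restricting to an isomorphism $A'\to G'$; via the inverse of this isomorphism $V$ becomes an $\mathbb{R}G'$-module, and $\chi'$ denotes its character. The triple $(G,V,n)$ has the $E1$-property if there is $g\in G$ such that $gn$ has eigenvalue $1$. *)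

(* Defs.v *)
From mathcomp Require Import all_boot all_order all_algebra all_fingroup.
From mathcomp Require Import mxrepresentation.
From mathcomp Require Export reals.
Set Implicit Arguments. Unset Strict Implicit. Unset Printing Implicit Defensive.
Import GRing.Theory Num.Theory.
Local Open Scope ring_scope.

(* GL(V) is identified with the group of invertible (d+1)x(d+1) real matrices
   under matrix multiplication; the finite group G <= GL(V) is the image of a
   faithful matrix representation rG of an abstract finite group. *)

(* M lies in A = <G, n> = { g n^i | g in G, i in N } *)
Definition inA (R : fieldType) (gT : finGroupType) (G : {group gT}) (d : nat)
  (rG : mx_representation R G d.+1) (n M : 'M[R]_d.+1) : Prop :=
  exists x, exists i : nat, x \in G /\ M = rG x *m n ^+ i.

Definition inA' (R : fieldType) (gT : finGroupType) (G : {group gT}) (d : nat)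
  (rG : mx_representation R G d.+1) (n M : 'M[R]_d.+1) : Prop :=
  inA rG n M /\ (inA rG n (- 1%:M) -> \det M = 1).

Definition same_ad (R : fieldType) (gT : finGroupType) (G : {group gT}) (d : nat)
  (rG : mx_representation R G d.+1) (a b : 'M[R]_d.+1) : Prop :=
  forall x, x \in G -> a *m rG x *m invmx a = b *m rG x *m invmx b.

Definition ad_trivial (R : fieldType) (gT : finGroupType) (G : {group gT}) (d : nat)
  (rG : mx_representation R G d.+1) (b : 'M[R]_d.+1) : Prop :=
  forall x, x \in G -> b *m rG x *m invmx b = rG x.

Definition ad_order (R : fieldType) (gT : finGroupType) (G : {group gT}) (d : nat)
  (rG : mx_representation R G d.+1) (b : 'M[R]_d.+1) (m : nat) : Prop :=
  (0 < m)%N /\ ad_trivial rG (b ^+ m) /\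
  (forall k : nat, (0 < k < m)%N -> ~ ad_trivial rG (b ^+ k)).

(* Main.v *)
Require Import Defs.
From mathcomp Require Import all_boot all_order all_algebra all_fingroup.
From mathcomp Require Import mxrepresentation reals.
From mathcomp.real_closed Require Import polyrcf.
Import GRing.Theory Num.Theory.
Local Open Scope ring_scope.
From mathcomp Require Import lra.

Lemma detX' (R : comRingType) d (M : 'M[R]_d.+1) k : \det (M ^+ k) = \det M ^+ k.
Proof. elim: k => [|k IH]; first by rewrite !expr0 det1. by rewrite !exprS detM IH. Qed.

Lemma normdet1 (R : realType) d (M : 'M[R]_d.+1) k :
  (0 < k)%N -> M ^+ k = 1 -> `|\det M| = 1.
Proof.
move=> k0 Mk; have : `|\det (M ^+ k)| = 1 by rewrite Mk det1 normr1.
by rewrite detX' normrX => /eqP; rewrite pexpr_eq1 // => /eqP.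
Qed.

Lemma pm1 (R : realType) (x : R) : `|x| = 1 -> x = 1 \/ x = -1.
Proof.
have [x0|x0] := lerP 0 x.
  by rewrite ger0_norm //; left.
by rewrite ltr0_norm // => h; right; rewrite -h opprK.
Qed.

Lemma trsum (R : realType) d m (F : nat -> 'M[R]_d.+1) :
  \tr (\sum_(k < m) F k) = \sum_(k < m) \tr (F k).
Proof. exact: raddf_sum. Qed.
Lemma schur_odd (R : realType) (gT : finGroupType) (G : {group gT})
  (d : nat) (rG : mx_representation R G d.+1) (c : 'M[R]_d.+1) :
  odd d.+1 -> mx_irreducible rG -> centgmx rG c -> exists l, c = l%:M.
Proof.
move=> od irr cc.
have [l hl] : {x | root (char_poly c) x}.
  by apply: odd_poly_root; rewrite size_char_poly /= negbK.
exists l; apply/eqP; rewrite -subr_eq0; apply/negPn/negP => nz.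
have cf : centgmx rG (c - l%:M).
  apply/centgmxP => x Gx; rewrite mulmxBl mulmxBr (centgmxP cc x Gx).
  by rewrite scalar_mxC.
have u := mx_Schur irr cf nz.
move: hl; rewrite -eigenvalue_root_char => /eigenvalueP [v hv nv].
have : v *m (c - l%:M) = 0 by rewrite mulmxBr hv mul_mx_scalar subrr.
by move/(canRL (mulmxK u)); rewrite mul0mx; apply/eqP.
Qed.
Lemma rGpow (R : realType) (gT : finGroupType) (G : {group gT})
  (d : nat) (rG : mx_representation R G d.+1) x : x \in G -> rG x ^+ #[x]%g = 1.
Proof. by move=> Gx; rewrite -repr_mxX // expg_order repr_mx1. Qed.

Lemma nconj (R : realType) (gT : finGroupType) (G : {group gT})
  (d : nat) (rG : mx_representation R G d.+1) (n : 'M[R]_d.+1) :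
  n \in unitmx ->
  (forall x, x \in G -> exists y, y \in G /\ n *m rG x *m invmx n = rG y) ->
  forall i x, x \in G -> exists y, y \in G /\ n ^+ i *m rG x = rG y *m n ^+ i.
Proof.
move=> nu hn; elim=> [|i IH] x Gx.
  by exists x; rewrite expr0 mul1mx mulmx1.
have [y [Gy hy]] := IH x Gx; have [z [Gz hz]] := hn y Gy.
exists z; split=> //; rewrite exprS -mulmxE -mulmxA hy mulmxA -hz.
by rewrite mulmxA mulmxKV.
Qed.

Lemma inA_mul (R : realType) (gT : finGroupType) (G : {group gT})
  (d : nat) (rG : mx_representation R G d.+1) (n : 'M[R]_d.+1) :
  n \in unitmx ->
  (forall x, x \in G -> exists y, y \in G /\ n *m rG x *m invmx n = rG y) ->
  forall a b, inA rG n a -> inA rG n b -> inA rG n (a *m b).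
Proof.
move=> nu hn a b [x [i [Gx ->]]] [y [j [Gy ->]]].
have [z [Gz hz]] := @nconj _ _ _ _ rG n nu hn i y Gy.
exists (x * z)%g, (i + j)%N; split; first by rewrite groupM.
by rewrite repr_mxM // exprD -mulmxE -!mulmxA (mulmxA (n ^+ i)) hz !mulmxA.
Qed.

Lemma inA_pow (R : realType) (gT : finGroupType) (G : {group gT})
  (d : nat) (rG : mx_representation R G d.+1) (n : 'M[R]_d.+1) :
  n \in unitmx ->
  (forall x, x \in G -> exists y, y \in G /\ n *m rG x *m invmx n = rG y) ->
  forall a k, inA rG n a -> inA rG n (a ^+ k).
Proof.
move=> nu hn a k ha; elim: k => [|k IH].
  by exists 1%g, 0%N; rewrite group1 repr_mx1 expr0 mul1mx.
by rewrite exprS -mulmxE; apply: (@inA_mul _ _ _ _ rG n nu hn).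
Qed.

Theorem proposition2 (R : realType) (gT : finGroupType) (G : {group gT})
  (d : nat) (rG : mx_representation R G d.+1) (n : 'M[R]_d.+1) :
  odd d.+1 ->
  mx_faithful rG ->
  mx_irreducible rG ->
  (exists x, x \in G /\ rG x != 1%:M) ->
  (forall x, x \in G -> rG x != - 1%:M) ->
  n \in unitmx ->
  (forall x, x \in G -> exists y, y \in G /\ n *m rG x *m invmx n = rG y) ->
  (exists k : nat, (0 < k)%N /\ n ^+ k = 1%:M) ->
  (exists g, g \in G /\
     exists m : nat, ad_order rG (rG g *m n) m /\ ~~ odd m /\
     exists a, inA' rG n a /\ same_ad rG a (rG g *m n) /\
       0 < m%:R^-1 * \sum_(k < m) \tr (a ^+ k) /\
       0 < m%:R^-1 * \sum_(k < m) (-1) ^+ k * \tr (a ^+ k)) ->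
  exists g, g \in G /\ eigenvalue (rG g *m n) 1.
Proof.
move=> od _ irr _ _ nu hn [K [K0 nK]]
  [g [Gg [m [[m0 [trm _]] [evm [a [[inAa detA] [sad [t1 t2]]]]]]]]].
exists g; split=> //.
set b := rG g *m n.
have bE : rG g *m n = b by [].

have bu : b \in unitmx by rewrite unitmx_mul repr_mx_unit.
have db : `|\det b| = 1.
  by rewrite -bE detM normrM (@normdet1 _ _ _ _ (order_gt0 g)) ?rGpow // (@normdet1 _ _ _ _ K0) ?nK // mulr1.
move: sad trm; rewrite /same_ad /ad_trivial bE => sad trm.
clearbody b.
have dn : `|\det n| = 1 by apply: (@normdet1 _ _ _ _ K0); rewrite nK.
have dG : forall x, x \in G -> `|\det (rG x)| = 1.
  by move=> x Gx; apply: (@normdet1 _ _ _ _ (order_gt0 x)); rewrite rGpow.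
have [au da] : a \in unitmx /\ `|\det a| = 1.
  case: inAa => x [i [Gx ->]]; split.
    by rewrite unitmx_mul repr_mx_unit //= unitrX.
  by rewrite detM detX' normrM normrX dG // dn expr1n mulr1.
have cc : centgmx rG (invmx b *m a).
  apply/centgmxP => x Gx.
  have e : a *m rG x = b *m rG x *m invmx b *m a by rewrite -(sad x Gx) mulmxKV.
  by rewrite -mulmxA e !mulmxA mulVmx // mul1mx.
have [mu hmu] := @schur_odd _ _ _ _ rG _ od irr cc.
have ea : a = mu *: b by rewrite -mul_mx_scalar -hmu mulKVmx.
have cb : centgmx rG (b ^+ m).
  apply/centgmxP => x Gx.
  have bmu : b ^+ m \in unitmx by rewrite unitrX.
  by rewrite -{2}(trm x Gx) mulmxKV.
have [la hla] := @schur_odd _ _ _ _ rG _ od irr cb.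
have am : a ^+ m = (mu ^+ m * la)%:M by rewrite ea exprZn hla scale_scalar_mx.
set ka := mu ^+ m * la in am.
have nka : `|ka| = 1.
  have : `|\det (a ^+ m)| = 1 by rewrite detX' normrX da expr1n.
  by rewrite am det_scalar normrX => /eqP; rewrite pexpr_eq1 // => /eqP.
have am1 : a ^+ m = 1.
  case: (@pm1 _ _ nka) => hk; first by rewrite am hk.
  exfalso.
  have iA : inA rG n (- 1%:M).
    have -> : - 1%:M = (ka%:M : 'M[R]_d.+1) by rewrite hk raddfN.
    rewrite -am; exact: (@inA_pow _ _ _ _ rG n nu hn).
  have := detA iA.
  have : \det (a ^+ m) = (- 1 : R) by rewrite am hk det_scalar -signr_odd od expr1.
  rewrite detX' => h1 h2; move: h1; rewrite h2 expr1n => /eqP.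
  by rewrite -addr_eq0 -[1 + 1]/(2%:R) pnatr_eq0.
have E1 : eigenvalue a 1.
  set S := \sum_(k < m) a ^+ k.
  have Sa : S *m a = 1 *: S.
    rewrite scale1r mulmxE mulr_suml.
    have h1 : \sum_(k < m.+1) a ^+ k = S + 1 by rewrite big_ord_recr /= am1.
    have h2 : \sum_(k < m.+1) a ^+ k = 1 + \sum_(k < m) a ^+ k.+1.
      by rewrite big_ord_recl expr0.
    have : S + 1 = \sum_(k < m) a ^+ k.+1 + 1 by rewrite -h1 h2 addrC.
    move/addIr => ->.
    by apply: eq_bigr => i _; rewrite exprSr.
  have S0 : S != 0.
    by apply/eqP => S0; move: t1; rewrite -trsum -/S S0 mxtrace0 mulr0 Order.POrderTheory.ltxx.
  apply/eqP => E0; have := introT eigenspaceP Sa; rewrite E0 submx0.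
  by rewrite (negbTE S0).
have sm : (-1 : R) ^+ m = 1 by rewrite -signr_odd (negbTE evm) expr0.
have E2 : eigenvalue a (-1).
  set S := \sum_(k < m) (-1) ^+ k *: a ^+ k.
  have Sa : S *m a = -1 *: S.
    rewrite scaleN1r mulmxE mulr_suml.
    have h1 : \sum_(k < m.+1) (-1) ^+ k *: a ^+ k = S + 1.
      by rewrite big_ord_recr /= am1 sm scale1r.
    have h2 : \sum_(k < m.+1) (-1) ^+ k *: a ^+ k
        = 1 - \sum_(k < m) (-1) ^+ k *: a ^+ k.+1.
      rewrite big_ord_recl expr0 scale1r -sumrN; congr (_ + _).
      by apply: eq_bigr => i _; rewrite /= exprS /bump /= add1n exprS mulN1r scaleNr.
    have : S + 1 = - \sum_(k < m) (-1) ^+ k *: a ^+ k.+1 + 1 by rewrite -h1 h2 addrC.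
    move/addIr => ->; rewrite opprK.
    by apply: eq_bigr => i _; rewrite exprSr -scalerAl.
  have S0 : S != 0.
    apply/eqP => S0; move: t2.
    have -> : \sum_(k < m) (-1) ^+ k * \tr (a ^+ k) = \tr S.
      rewrite /S raddf_sum; apply: eq_bigr => i _; exact: (esym (mxtraceZ _ _)).
    by rewrite S0 mxtrace0 mulr0 Order.POrderTheory.ltxx.
  apply/eqP => E0; have := introT eigenspaceP Sa; rewrite E0 submx0.
  by rewrite (negbTE S0).
have nmu : `|mu| = 1.
  have : `|\det a| = `|mu| ^+ d.+1 by rewrite ea detZ normrM normrX db mulr1.
  by rewrite da => /esym/eqP; rewrite pexpr_eq1 // => /eqP.
case: (@pm1 _ _ nmu) => hm.
  by move: ea E1; rewrite hm scale1r => <-.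
move/eigenvalueP: E2 => [v hv nv]; apply/eigenvalueP; exists v => //.
move: hv; rewrite ea hm scaleN1r mulmxN => hv.
by rewrite scale1r -[v *m b]opprK hv scaleN1r opprK.
Qed.
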